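(* Let $n\ge 3$ and let $i\ge 0$ be an integer with $i>(n-4)(n-1)$. Then the map $\mathrm{per}$ restricts to a bijection from $\mathcal{L}_i$ onto $\mathcal{L}_{i+n-1}$.
   Context: Fix an integer $n\ge 3$. A partition is a sequence $\Lambda=(\lambda_j)_{j\ge1}$ of non-negative integers with finite support; $\mathrm{wt}(\Lambda)=\sum_j j\lambda_j$; $\mathrm{Part}(k)$ is the set of partitions with $\lambda_j=0$ for $j>k$. Write $x^\Lambda=\prod_j x_j^{\lambda_j}$, $\deg(x^\Lambda)=\sum_j\lambda_j$. $\mathcal{B}=\{x^\Lambda\partial_k : 1\le k\le n,\ \Lambda\in\mathrm{Part}(k-1)\}$ (formal monomials times the symbol $\partial_k$). For an integer $i\ge-1$, let $r_i\in\{1,\dots,n-1\}$ with $i\equiv r_i\pmod{n-1}$ and $h_i=\lfloor (i-1)/(n-1)\rfloor+1$. Define $\mathrm{WD}(x^\Lambda\partial_k)=\mathrm{wt}(\Lambda)-\deg(x^\Lambda)+n-k$ and $\mathrm{lev}_i(x^\Lambda\partial_k)=h_i\,\mathrm{WD}(x^\Lambda\partial_k)+\deg(x^\Lambda)-1$. For $i\ge-1$, $\mathcal{N}_i=\{b\in\mathcal{B}: \mathrm{lev}_j(b)\le j\text{ for some integer } -1\le j\le i\}$, and $\mathcal{L}_i=\mathcal{N}_i\setminus\mathcal{N}_{i-1}$ for $i\ge0$. For $x^\Lambda\partial_k\in\mathcal{B}$ with $\mathrm{WD}(x^\Lambda\partial_k)\le n-1$, the period function is $\mathrm{per}(x^\Lambda\partial_k)=x_1^{\,n-1-\mathrm{WD}(x^\Lambda\partial_k)}x^\Lambda\partial_k$.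 *)

(* Defs.v *)
From Stdlib Require Import ZArith List Lia.
Import ListNotations.
Open Scope Z_scope.

(* An element x^Lambda d_k of B is represented by k and the list
   [lambda_1; ...; lambda_{k-1}] (so Lambda in Part(k-1), and the
   representation is canonical: lambda_j = 0 for j >= k). *)
Record Bel := mkB { bk : nat; blam : list nat }.

Definition validB (n : nat) (b : Bel) : Prop :=
  (1 <= bk b <= n)%nat /\ length (blam b) = (bk b - 1)%nat.

Fixpoint wt_aux (j : nat) (l : list nat) : nat :=
  match l with
  | [] => 0%nat
  | x :: l' => (j * x + wt_aux (S j) l')%nat
  end.
Definition wt (l : list nat) : nat := wt_aux 1 l.

Definition deg (l : list nat) : nat := list_sum l.

Definition WD (n : nat) (b : Bel) : Z :=
  Z.of_nat (wt (blam b)) - Z.of_nat (deg (blam b)) + Z.of_nat n - Z.of_nat (bk b).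

Definition hh (n : nat) (i : Z) : Z := (i - 1) / (Z.of_nat n - 1) + 1.

Definition lev (n : nat) (i : Z) (b : Bel) : Z :=
  hh n i * WD n b + Z.of_nat (deg (blam b)) - 1.

Definition inN (n : nat) (i : Z) (b : Bel) : Prop :=
  validB n b /\ exists j : Z, -1 <= j <= i /\ lev n j b <= j.

Definition inL (n : nat) (i : Z) (b : Bel) : Prop :=
  inN n i b /\ ~ inN n (i - 1) b.

(* per(x^Lambda d_k) = x_1^{n-1-WD} x^Lambda d_k  (meaningful when WD <= n-1;
   for k = 1 one has WD = n-1, so the factor is trivial). *)
Definition per (n : nat) (b : Bel) : Bel :=
  mkB (bk b)
      (match blam b with
       | [] => []
       | x :: l => (x + Z.to_nat (Z.of_nat n - 1 - WD n b))%nat :: l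
       end).

(* Main.v *)
Require Import Defs.
From Stdlib Require Import ZArith List Lia.
Import ListNotations.
Open Scope Z_scope.

Lemma WD_cons n k x l :
  WD n (mkB k (x :: l)) =
  Z.of_nat (wt_aux 2 l) - Z.of_nat (list_sum l) + Z.of_nat n - Z.of_nat k.
Proof. unfold WD, wt, deg; simpl. lia. Qed.

Lemma deg_cons x l : deg (x :: l) = (x + list_sum l)%nat.
Proof. reflexivity. Qed.

Lemma wt_aux_ge j l : (j * list_sum l <= wt_aux j l)%nat.
Proof.
  revert j; induction l as [|a l IH]; intro j; simpl; [lia|].
  specialize (IH (S j)). nia.
Qed.

Lemma wt_aux_le j l : (wt_aux j l <= (j + length l - 1) * list_sum l)%nat.
Proof.
  revert j; induction l as [|a l IH]; intro j; simpl; [lia|].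
  specialize (IH (S j)). nia.
Qed.

Lemma hh_bounds n j : (3 <= n)%nat ->
  (Z.of_nat n - 1) * (hh n j - 1) <= j - 1 < (Z.of_nat n - 1) * hh n j.
Proof.
  intros Hn. unfold hh.
  assert (HN : 0 < Z.of_nat n - 1) by lia.
  pose proof (Z.div_mod (j - 1) (Z.of_nat n - 1) ltac:(lia)).
  pose proof (Z.mod_pos_bound (j - 1) (Z.of_nat n - 1) HN).
  nia.
Qed.

Lemma shift n j b c : (3 <= n)%nat ->
  WD n c = WD n b ->
  Z.of_nat (deg (blam c)) = Z.of_nat (deg (blam b)) + (Z.of_nat n - 1 - WD n b) ->
  lev n j c = lev n (j - (Z.of_nat n - 1)) b + (Z.of_nat n - 1).
Proof.
  intros Hn HW Hd. unfold lev, hh.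
  replace (j - 1) with ((j - (Z.of_nat n - 1) - 1) + 1 * (Z.of_nat n - 1)) by ring.
  rewrite Z.div_add by lia. rewrite HW, Hd. ring.
Qed.

Lemma bigWD n j b : (3 <= n)%nat -> -1 <= j -> lev n j b <= j ->
  Z.of_nat n - 1 <= WD n b -> (deg (blam b) <= 1)%nat.
Proof.
  intros Hn Hj Hl HW. pose proof (hh_bounds n j Hn) as [H1 H2].
  unfold lev in Hl. set (h := hh n j) in *. set (w := WD n b) in *.
  destruct (Z_le_gt_dec j 0).
  - assert (h = 0) by nia. subst h. rewrite H in Hl. lia.
  - assert (1 <= h) by nia. nia.
Qed.

Lemma deg1 n b : validB n b -> deg (blam b) = 1%nat -> WD n b <= Z.of_nat n - 2.
Proof.
  intros [Hk Hlen] Hd. unfold WD, wt, deg in *.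
  pose proof (wt_aux_le 1 (blam b)) as H. rewrite Hd, Hlen in H. rewrite Hd. lia.
Qed.

Lemma inN_mono n i i' b : i <= i' -> inN n i b -> inN n i' b.
Proof. intros H [V [j [Hj Hl]]]. split; [exact V|]. exists j. split; [lia|exact Hl]. Qed.

Lemma emptyWD n b : validB n b -> blam b = [] -> WD n b = Z.of_nat n - 1.
Proof.
  intros [Hk Hlen] He. rewrite He in Hlen. simpl in Hlen.
  unfold WD. rewrite He. simpl. unfold wt, deg. simpl. lia.
Qed.

Theorem corollary2p17 (n : nat) (i : Z) :
  (3 <= n)%nat -> 0 <= i -> (Z.of_nat n - 4) * (Z.of_nat n - 1) < i ->
  (forall b, inL n i b -> WD n b <= Z.of_nat n - 1 /\
                          inL n (i + Z.of_nat n - 1) (per n b)) /\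
  (forall b1 b2, inL n i b1 -> inL n i b2 -> per n b1 = per n b2 -> b1 = b2) /\
  (forall c, inL n (i + Z.of_nat n - 1) c -> exists b, inL n i b /\ per n b = c).
Proof.
  intros Hn Hi Hth.
  set (N := Z.of_nat n - 1).
  assert (HN : 2 <= N) by (unfold N; lia).
  split; [|split].
  -
    intros b [[V [j0 [Hj0 Hl0]]] Hnot].
    assert (Ej0 : j0 = i).
    { destruct (Z.eq_dec j0 i); [auto|]. exfalso. apply Hnot. split; [exact V|].
      exists j0. split; [lia|exact Hl0]. }
    subst j0.
    assert (Hd : (1 <= deg (blam b))%nat).
    { destruct (deg (blam b)) eqn:E; [|lia]. exfalso. apply Hnot. split; [exact V|].
      exists (-1). split; [lia|]. unfold lev. rewrite E.
      pose proof (hh_bounds n (-1) Hn) as [H1 H2].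
      assert (hh n (-1) = 0) by nia. rewrite H. lia. }
    assert (Hw : WD n b <= N - 1).
    { destruct (Z_le_gt_dec (WD n b) (N - 1)); [auto|].
      pose proof (bigWD n i b Hn ltac:(lia) Hl0 ltac:(unfold N in *; lia)).
      pose proof (deg1 n b V ltac:(lia)). unfold N in *; lia. }
    split; [lia|].
    destruct b as [k l]. simpl in *.
    destruct l as [|x l].
    { pose proof (emptyWD n _ V eq_refl). unfold N in *; lia. }
    set (t := Z.to_nat (Z.of_nat n - 1 - WD n {| bk := k; blam := x :: l |})).
    assert (Ht : Z.of_nat t = N - WD n {| bk := k; blam := x :: l |}).
    { unfold t, N. lia. }
    assert (Hper : per n {| bk := k; blam := x :: l |} = mkB k ((x + t)%nat :: l)) by reflexivity.
    rewrite Hper.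
    assert (HW : WD n (mkB k ((x + t)%nat :: l)) = WD n {| bk := k; blam := x :: l |}).
    { rewrite !WD_cons. reflexivity. }
    assert (HD : Z.of_nat (deg (blam (mkB k ((x + t)%nat :: l)))) =
                 Z.of_nat (deg (blam {| bk := k; blam := x :: l |})) +
                 (Z.of_nat n - 1 - WD n {| bk := k; blam := x :: l |})).
    { cbn [blam]. rewrite !deg_cons. unfold N in Ht. lia. }
    assert (Vp : validB n (mkB k ((x + t)%nat :: l))).
    { destruct V as [V1 V2]. split; simpl in *; auto. }
    split.
    + split; [exact Vp|]. exists (i + N). split; [lia|].
      rewrite (shift n (i + N) _ _ Hn HW HD). unfold N in *.
      replace (i + (Z.of_nat n - 1) - (Z.of_nat n - 1)) with i by lia. lia.
    + intros [_ [j [Hj Hl]]].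
      destruct (Z_le_gt_dec (N - 1) j).
      * apply Hnot. split; [exact V|]. exists (j - N). split; [lia|].
        rewrite (shift n j _ _ Hn HW HD) in Hl. unfold N in *; lia.
      * pose proof (hh_bounds n j Hn) as [H1 H2].
        unfold lev in Hl. rewrite HW in Hl. cbn [blam] in Hl, HD. rewrite HD in Hl.
        set (h := hh n j) in *. set (w := WD n {| bk := k; blam := x :: l |}) in *.
        fold N in H1, H2.
        assert (0 <= h <= 1) by nia.
        destruct (Z.eq_dec h 0) as [E|E]; [rewrite E in *; nia|].
        assert (h = 1) by lia. rewrite H0 in *. unfold N in *; nia.
  -
    intros [k1 l1] [k2 l2] _ _ Heq. unfold per in Heq. simpl in Heq.
    injection Heq as Hk Hl. subst k2.
    destruct l1 as [|x1 m1], l2 as [|x2 m2]; try discriminate; [reflexivity|].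
    injection Hl as Hx Hm. subst m2.
    rewrite !WD_cons in Hx. f_equal. f_equal. lia.
  -
    intros c [[V [j0 [Hj0 Hl0]]] Hnot].
    assert (Ej0 : j0 = i + N).
    { destruct (Z.eq_dec j0 (i + N)); [auto|]. exfalso. apply Hnot. split; [exact V|].
      exists j0. split; [unfold N in *; lia|exact Hl0]. }
    subst j0.
    assert (Hd : (2 <= deg (blam c))%nat).
    { destruct (Nat.le_gt_cases 2 (deg (blam c))); [auto|]. exfalso. apply Hnot.
      split; [exact V|]. exists 0. split; [unfold N in *; lia|]. unfold lev.
      pose proof (hh_bounds n 0 Hn) as [H1 H2].
      assert (hh n 0 = 0) by nia. rewrite H0. lia. }
    assert (Hw : WD n c <= N - 1).
    { destruct (Z_le_gt_dec (WD n c) (N - 1)); [auto|].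
      pose proof (bigWD n (i + N) c Hn ltac:(lia) Hl0 ltac:(unfold N in *; lia)). lia. }
    destruct c as [k l]. simpl in *.
    destruct l as [|x l].
    { pose proof (emptyWD n _ V eq_refl). unfold N in *; lia. }
    set (w := WD n {| bk := k; blam := x :: l |}) in *.
    set (t := Z.to_nat (N - w)).
    assert (Ht : Z.of_nat t = N - w) by (unfold t; lia).
    assert (Hx : (t <= x)%nat).
    { destruct (Nat.le_gt_cases t x); [auto|]. exfalso.
      set (d := Z.of_nat (deg (x :: l))) in *.
      assert (Hdle : d <= Z.of_nat x + w).
      { unfold d, w. rewrite deg_cons, WD_cons. pose proof (wt_aux_ge 2 l).
        destruct V as [V1 V2]. simpl in V1. lia. }
      apply Hnot. split; [exact V|]. exists ((d - 1) * N).
      split; [unfold N in *; nia|].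
      pose proof (hh_bounds n ((d - 1) * N) Hn) as [H1 H2]. fold N in H1, H2.
      assert (hh n ((d - 1) * N) = d - 1) by nia.
      unfold lev. rewrite H0. fold w. cbn [blam]. fold d.
      assert (2 <= d) by (unfold d; lia).
      assert (d - 1 >= 0) by lia. assert (w + 1 <= N) by lia. nia. }
    exists (mkB k ((x - t)%nat :: l)).
    assert (HW : WD n {| bk := k; blam := x :: l |} = WD n (mkB k ((x - t)%nat :: l))).
    { rewrite !WD_cons. reflexivity. }
    assert (HD : Z.of_nat (deg (blam {| bk := k; blam := x :: l |})) =
                 Z.of_nat (deg (blam (mkB k ((x - t)%nat :: l)))) +
                 (Z.of_nat n - 1 - WD n (mkB k ((x - t)%nat :: l)))).
    { cbn [blam]. rewrite !deg_cons. rewrite <- HW. fold w. unfold N in Ht. lia. }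
    assert (Vb : validB n (mkB k ((x - t)%nat :: l))).
    { destruct V as [V1 V2]. split; simpl in *; auto. }
    split.
    + split.
      * split; [exact Vb|]. exists i. split; [lia|].
        rewrite (shift n (i + N) _ _ Hn HW HD) in Hl0. unfold N in *.
        replace (i + (Z.of_nat n - 1) - (Z.of_nat n - 1)) with i in Hl0 by lia. lia.
      * intros [_ [j [Hj Hl]]]. apply Hnot. split; [exact V|].
        exists (j + N). split; [unfold N in *; lia|].
        rewrite (shift n (j + N) _ _ Hn HW HD). unfold N in *.
        replace (j + (Z.of_nat n - 1) - (Z.of_nat n - 1)) with j by lia. lia.
    + unfold per. simpl. rewrite <- HW. fold w. f_equal. f_equal.
      fold t. lia.
Qed.
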